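(* Let $Y$ be a compact metric space and $X:=Z\times Y$. Then every homeomorphism $\alpha\in\mathcal{O}(\zeta\times\mathrm{id})\subset\mathrm{Homeo}(X)$ has mean dimension zero.
   Context: $(Z,\zeta)$ is the point-like minimal system of Deeley–Putnam–Strung associated to a minimal diffeomorphism of an odd-dimensional sphere $S^d$, $d\ge3$: $Z$ is an infinite compact connected metric space of finite covering dimension with the $K$-theory and Čech cohomology of a point, and $\zeta$ is a minimal homeomorphism of $Z$. $\mathcal{O}(\zeta\times\mathrm{id})=\{G^{-1}\circ(\zeta\times\mathrm{id})\circ G : G\in\mathrm{Homeo}(X)\}$. Mean dimension: for a finite open cover $\mathcal{U}$, $\mathrm{ord}(\mathcal{U})=\max_x\sum_{U\in\mathcal{U}}\chi_U(x)-1$, $\mathcal{D}(\mathcal{U})=\min$ of $\mathrm{ord}(\mathcal{V})$ over finite open refinements $\mathcal{V}$ of $\mathcal{U}$, $\mathcal{D}(\mathcal{U},\alpha,n)=\mathcal{D}(\mathcal{U}\vee\alpha^{-1}\mathcal{U}\vee\cdots\vee\alpha^{-n+1}\mathcal{U})$, $\mathcal{D}(\mathcal{U},\alpha)=\lim_n\mathcal{D}(\mathcal{U},\alpha,n)/n$, and $\mathrm{mdim}(\alpha)=\sup_{\mathcal{U}}\mathcal{D}(\mathcal{U},\alpha)$. *)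

(* Defs.v *)
From HB Require Import structures.
From mathcomp Require Import all_boot all_order all_algebra.
From mathcomp Require Import all_classical all_reals all_analysis.
From Stdlib Require List.
Set Implicit Arguments. Unset Strict Implicit. Unset Printing Implicit Defensive.
Import Order.TTheory GRing.Theory Num.Theory.
Import numFieldNormedType.Exports.
Local Open Scope classical_set_scope.
Local Open Scope ring_scope.

Section Defs.
Context {T : topologicalType}.

Definition is_homeo (f : T -> T) : Prop :=
  exists g : T -> T, cancel f g /\ cancel g f /\ continuous f /\ continuous g.

Definition finite_open_cover (U : seq (set T)) : Prop :=
  List.Forall open U /\ (forall x : T, exists A, List.In A U /\ A x).

Definition refines (V U : seq (set T)) : Prop :=
  forall B, List.In B V -> exists A, List.In A U /\ B `<=` A.

(* ord(V) <= n, i.e. every point lies in at most n+1 members of V *)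
Definition ord_le (V : seq (set T)) (n : nat) : Prop :=
  forall x : T, (count (fun A => `[< A x >]) V <= n.+1)%N.

Definition cover_D {R : realType} (U : seq (set T)) : R :=
  inf [set (n%:R : R) | n in [set n : nat |
         exists V, finite_open_cover V /\ refines V U /\ ord_le V n]].

Definition cover_join (U V : seq (set T)) : seq (set T) :=
  [seq A `&` B | A <- U, B <- V].

Fixpoint cover_iter_join (a : T -> T) (U : seq (set T)) (n : nat) : seq (set T) :=
  match n with
  | 0 => [:: setT]
  | k.+1 => cover_join (cover_iter_join a U k)
                       [seq (iter k a) @^-1` A | A <- U]
  end.

Definition cover_D_n {R : realType} (U : seq (set T)) (a : T -> T) (n : nat) : R :=
  cover_D (cover_iter_join a U n).

Definition cover_D_dyn {R : realType} (U : seq (set T)) (a : T -> T) : R :=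
  limn (fun n : nat => (cover_D_n U a n : R) / n%:R).

Definition mdim {R : realType} (a : T -> T) : \bar R :=
  ereal_sup [set ((cover_D_dyn U a : R)%:E) | U in finite_open_cover].

Definition finite_covering_dim : Prop :=
  exists d : nat, forall U, finite_open_cover U ->
    exists V, finite_open_cover V /\ refines V U /\ ord_le V d.

Definition minimal_map (f : T -> T) : Prop :=
  forall A : set T, closed A -> f @` A = A -> A = set0 \/ A = setT.
End Defs.

Definition prod_id {Z Y : Type} (z : Z -> Z) : Z * Y -> Z * Y :=
  fun p => (z p.1, p.2).

Definition conj_orbit {X : topologicalType} (b : X -> X) : set (X -> X) :=
  [set a | exists G Ginv : X -> X,
     cancel G Ginv /\ cancel Ginv G /\ continuous G /\ continuous Ginv /\
     a = Ginv \o b \o G].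

(* Main.v *)
Require Import Defs.
From HB Require Import structures.
From mathcomp Require Import all_boot all_order all_algebra finmap.
From mathcomp Require Import all_classical all_reals all_analysis.
From mathcomp Require Import ring lra zify.
Set Implicit Arguments. Unset Strict Implicit. Unset Printing Implicit Defensive.
Import Order.TTheory GRing.Theory Num.Theory.
Import numFieldNormedType.Exports.
Local Open Scope classical_set_scope.
Local Open Scope ring_scope.

Lemma openX_ (R : realType) (Z Y : pseudoMetricType R) (C : set Z) (D : set Y) :
  open C -> open D -> open (C `*` D).
Proof.
move=> oC oD; rewrite openE => -[z y] [/= Cz Dy].
have /nbhs_ballP [e1 e10 h1] : nbhs z C by apply: open_nbhs_nbhs; split.
have /nbhs_ballP [e2 e20 h2] : nbhs y D by apply: open_nbhs_nbhs; split.
rewrite /interior; apply/nbhs_ballP; exists (Order.min e1 e2).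
  by rewrite /= lt_min; apply/andP; split.
move=> [z' y'] [/= b1 b2]; split.
  by apply: h1; apply: le_ball b1; rewrite ge_min lexx.
by apply: h2; apply: le_ball b2; rewrite ge_min lexx orbT.
Qed.

Lemma lebesgue_num (R : realType) (X : pseudoMetricType R) (U : seq (set X)) :
  compact [set: X] -> finite_open_cover U ->
  exists2 e : R, 0 < e & forall x, exists A, List.In A U /\ ball x e `<=` A.
Proof.
move=> cX [oU cU].
have hyp : forall x, [set: X] x -> \forall x' \near x & e \near (0:R)^'+,
   (fun e x => exists A, List.In A U /\ ball x e `<=` A) e x'.
  move=> x _.
  have [A [inA Ax]] := cU x.
  have oA : open A by move/List.Forall_forall: oU; apply.
  have /nbhs_ballP [r r0 hr] : nbhs x A by apply: open_nbhs_nbhs; split.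
  move: r0 => /= r0.
  exists (ball x (r/2), [set e : R | 0 < e < r/2]).
    split; rewrite /=; first by apply: nbhsx_ballx; rewrite divr_gt0.
    exists (r/2); first by rewrite /= divr_gt0.
    move=> e /= h e0; rewrite e0 /=.
    by move: h; rewrite /ball_ /= sub0r normrN gtr0_norm.
  move=> [x' e] [/= bx' /andP [e0 er]]; exists A; split => // w bw.
  apply: hr; rewrite (splitr r); apply: ball_triangle bx' _.
  by apply: le_ball bw; rewrite ltW.
have Hn : \forall e \near (0:R)^'+, [set: X] `<=`
    (fun x => exists A, List.In A U /\ ball x e `<=` A).
  exact: (proj1 (compact_near_coveringP [set: X]) cX) R (0:R)^'+
    (fun e x => exists A, List.In A U /\ ball x e `<=` A) _ hyp.
have [e [He e0]] := filter_ex (filterI Hn (nbhs_right_gt (0:R))).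
by exists e => // x; apply: He.
Qed.

Lemma In_map_seq (A B : Type) (f : A -> B) (s : seq A) a :
  List.In a s -> List.In (f a) (map f s).
Proof. elim: s => //= b s IH [->|/IH]; by [left|right]. Qed.

Lemma In_map_seqE (A B : Type) (f : A -> B) (s : seq A) b :
  List.In b (map f s) -> exists a, List.In a s /\ b = f a.
Proof.
elim: s => //= a s IH [<-|/IH [a' [h ->]]]; first by exists a; split; [left|].
by exists a'; split; [right|].
Qed.

Lemma In_cat (A : Type) (s t : seq A) x :
  List.In x (s ++ t) <-> List.In x s \/ List.In x t.
Proof.
elim: s => /= [|a s IH]; first by split; [right|case].
rewrite IH; tauto.
Qed.

Lemma In_allpairs (A B C : Type) (f : A -> B -> C) s t a b :
  List.In a s -> List.In b t -> List.In (f a b) [seq f x y | x <- s, y <- t].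
Proof.
elim: s => //= a' s IH [->|ha] hb; apply/In_cat; first by left; exact: In_map_seq.
by right; exact: IH.
Qed.

Lemma In_allpairsE (A B C : Type) (f : A -> B -> C) s t c :
  List.In c [seq f x y | x <- s, y <- t] ->
  exists a b, [/\ List.In a s, List.In b t & c = f a b].
Proof.
elim: s => //= a' s IH h; case/In_cat: h => h.
  have [b [hb ->]] := In_map_seqE h.
  by exists a', b; split => //; left.
have [a [b [h1 h2 ->]]] := IH h.
by exists a, b; split => //; right.
Qed.

Lemma count_allpairs (A B C : Type) (f : A -> B -> C) (p : pred C)
  (p1 : pred A) (p2 : pred B) s t :
  (forall a b, p (f a b) -> p1 a && p2 b) ->
  (count p [seq f x y | x <- s, y <- t] <= count p1 s * count p2 t)%N.
Proof.
move=> H; elim: s => //= a s IH.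
rewrite count_cat mulnDl; apply: leq_add => //.
rewrite count_map.
case: (boolP (p1 a)) => pa /=.
  rewrite mul1n; apply: sub_count => b /= /H /andP [].
  by [].
rewrite mul0n leqn0 -/(nilp _); apply/eqP; rewrite -(count_pred0 t).
apply: eq_count => b /=; apply/negP => /H /andP [pa' _]; by rewrite pa' in pa.
Qed.

Lemma mem_In (T : eqType) (x : T) (s : seq T) : x \in s -> List.In x s.
Proof.
elim: s => //= a s IH; rewrite in_cons => /orP [/eqP ->|/IH]; by [left|right].
Qed.

Lemma ball_cover (R : realType) (Z : pseudoMetricType R) (e : R) :
  0 < e -> compact [set: Z] ->
  exists P : seq (set Z), finite_open_cover P /\
    forall Pi, List.In Pi P -> exists c, Pi `<=` ball c e.
Proof.
move=> e0 cZ.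
have [[z0 _]|nZ] := pselect (exists z : Z, True); last first.
  exists [::]; split => //; split => // z; exfalso; exact: nZ (ex_intro _ z I).
pose Zp := HB.pack_for ptopologicalType Z (isPointed.Build Z z0).
have {}cZ : @cover_compact Zp [set: Z] by move: cZ; rewrite (@compact_cover Zp).
have hfs : finite_subset_cover [set: Z] (fun c : Z => (ball c e)°) [set: Z].
  apply: cZ; first by move=> c _; exact: open_interior.
  move=> z _; exists z => //; exact: nbhsx_ballx.
case: hfs => D' _ hD.
exists (map (fun c => (ball c e)°) (enum_fset D')); split; first split.
- apply: (proj2 (List.Forall_forall _ _)) => B hB; have [c [_ ->]] := In_map_seqE hB; exact: open_interior.
- move=> z; have [c Dc hc] := hD z I.
  exists ((ball c e)°); split => //; apply: In_map_seq; exact: mem_In.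
- move=> Pi hB; have [c [_ ->]] := In_map_seqE hB; exists c; exact: interior_subset.
Qed.

Lemma iter_cont (T : topologicalType) (a : T -> T) k :
  continuous a -> continuous (iter k a).
Proof.
move=> ha; elim: k => [|k IH] x /=; first exact: cvg_id.
exact: (continuous_comp (IH x) (ha _)).
Qed.

Lemma iter_join_cover (T : topologicalType) (a : T -> T) (U : seq (set T)) n :
  continuous a -> finite_open_cover U -> finite_open_cover (cover_iter_join a U n).
Proof.
move=> ha [oU cU]; elim: n => [|k [oJ cJ]] /=.
  split; first by constructor; [exact: openT|constructor].
  by move=> x; exists setT; split; [left|].
split.
  apply/List.Forall_forall => c hc.
  have [A [B [hA hB ->]]] := In_allpairsE hc.
  have [A' [hA' ->]] := In_map_seqE hB.
  apply: openI; first by move/List.Forall_forall: oJ; apply.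
  have := proj1 (continuousP (iter k a)) (@iter_cont _ a k ha); apply.
  by move/List.Forall_forall: oU; apply.
move=> x; have [A [hA Ax]] := cJ x; have [A' [hA' A'x]] := cU (iter k a x).
exists (A `&` (iter k a @^-1` A')); split; last by split.
by apply: In_allpairs => //; apply: In_map_seq.
Qed.

Lemma join_transfer (X Z : topologicalType) (Y : Type) (alpha : X -> X) (zeta : Z -> Z)
  (G : X -> Z * Y) (Ginv : Z * Y -> X)
  (hk : forall k x, iter k alpha x = Ginv (iter k zeta (G x).1, (G x).2))
  (P : seq (set Z)) (U : seq (set X)) (D : set Y)
  (hPD : forall Pi, List.In Pi P -> exists A, List.In A U /\
           forall z y, Pi z -> D y -> A (Ginv (z, y))) n E :
  List.In E (cover_iter_join zeta P n) ->
  exists E', List.In E' (cover_iter_join alpha U n) /\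
    forall x, E (G x).1 -> D (G x).2 -> E' x.
Proof.
elim: n E => [|k IH] E /=.
  case=> [<-|[]]; exists setT; split => //; by left.
move=> hE; have [E1 [B [hE1 hB ->]]] := In_allpairsE hE.
have [Pi [hPi ->]] := In_map_seqE hB.
have [E1' [hE1' H1]] := IH _ hE1.
have [A [hA HA]] := hPD _ hPi.
exists (E1' `&` (iter k alpha @^-1` A)); split.
  by apply: In_allpairs => //; apply: In_map_seq.
move=> x [/= e1 pix] dx; split; first exact: H1.
by rewrite /= hk; apply: HA.
Qed.

Lemma bounded_lim (R : realType) (c : nat -> R) (M : R) :
  (forall n, 0 <= c n <= M) -> limn (fun n : nat => c n / n%:R) = 0.
Proof.
move=> hc; apply: cvg_lim => //.
have hM : 0 <= M by have /andP [h1 h2] := hc 0%N; exact: le_trans h2.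
have h : (fun n : nat => 2 * M * harmonic n) @ \oo --> (0:R).
  by rewrite -(mulr0 (2*M)); apply: cvgM; [exact: cvg_cst | exact: cvg_harmonic].
apply: (@squeeze_cvgr nat \oo _ R (fun=> 0) (fun n => 2 * M * harmonic n)
   (fun n => c n / n%:R)); last 2 first.
- exact: cvg_cst.
- exact: h.
near=> n.
have n0 : (0 < n)%N by near: n; exists 1%N.
have /andP [c0 cM] := hc n.
have nr0 : 0 < n%:R :> R by rewrite ltr0n.
apply/andP; split; first by rewrite divr_ge0.
rewrite /harmonic /=.
apply: (@le_trans _ _ (M / n%:R)); first by rewrite ler_wpM2r // invr_ge0 ltW.
rewrite ler_pdivrMr //.
have e : 2 * M / n.+1%:R * n%:R = M * (2 * n%:R / n.+1%:R).
  by field; rewrite gt_eqF // ltr_wpDr // ltW.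
rewrite e -{1}(mulr1 M) ler_wpM2l // ler_pdivlMr ?ltr0n // mul1r.
by rewrite -natrM ler_nat; lia.
Unshelve. all: end_near.
Qed.


Theorem lemma3p2 (R : realType) (Z Y : pseudoMetricType R) (zeta : Z -> Z)
  (hZhaus : hausdorff_space Z) (hZcpt : compact [set: Z])
  (hZinf : infinite_set [set: Z]) (hZconn : connected [set: Z])
  (hZdim : @finite_covering_dim Z)
  (hzeta : is_homeo zeta) (hzmin : minimal_map zeta)
  (hYhaus : hausdorff_space Y) (hYcpt : compact [set: Y])
  (alpha : Z * Y -> Z * Y)
  (halpha : alpha \in conj_orbit (@prod_id Z Y zeta)) :
  @mdim _ R alpha = 0%E.
Proof.
move: halpha; rewrite inE => -[G [Ginv [GK [GiK [cG [cGi ha]]]]]].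
have [zi [_ [_ [czeta _]]]] := hzeta.
have hk : forall k x, iter k alpha x = Ginv (iter k zeta (G x).1, (G x).2).
  elim=> [|k IH] x /=; first by rewrite -surjective_pairing GK.
  by rewrite IH ha /= GiK.
have [d hd] := hZdim.
have cX : compact [set: Z * Y].
  by rewrite -setXTT; exact: compact_setX.
have key : forall U, finite_open_cover U -> cover_D_dyn U alpha = 0 :> R.
  move=> U hU.
  pose U' := [seq Ginv @^-1` A | A <- U].
  have hU' : finite_open_cover U'.
    case: hU => oU cU; split.
      apply/List.Forall_forall => B hB; have [A [hA ->]] := In_map_seqE hB.
      apply: (proj1 (continuousP Ginv) cGi).
      by move/List.Forall_forall: oU; apply.
    move=> x; have [A [hA Ax]] := cU (Ginv x).
    by exists (Ginv @^-1` A); split => //; apply: In_map_seq.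
  have [e e0 he] := lebesgue_num cX hU'.
  have [P [hP hPb]] := ball_cover e0 hZcpt.
  have [Q [hQ hQb]] := ball_cover e0 hYcpt.
  pose M := (d.+1 * size Q)%N.
  apply: (@bounded_lim R _ M%:R) => n.
  have [Vz [hVz [rVz ordVz]]] := hd _ (iter_join_cover n czeta hP).
  pose V := [seq G @^-1` (C `*` D) | C <- Vz, D <- Q].
  have hV : exists W, finite_open_cover W /\ refines W (cover_iter_join alpha U n) /\ ord_le W M.
    exists V; split; [|split].
    - case: hVz => oVz cVz; case: hQ => oQ cQ; split.
        apply/List.Forall_forall => B hB.
        have [C [D [hC hD ->]]] := In_allpairsE hB.
        apply: (proj1 (continuousP G) cG); apply: openX_.
          by move/List.Forall_forall: oVz; apply.
        by move/List.Forall_forall: oQ; apply.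
      move=> x; have [C [hC Cx]] := cVz (G x).1; have [D [hD Dx]] := cQ (G x).2.
      exists (G @^-1` (C `*` D)); split; last by split.
      exact: In_allpairs.
    - move=> B hB; have [C [D [hC hD ->]]] := In_allpairsE hB.
      have [E [hE CE]] := rVz _ hC.
      have [c' Dc'] := hQb _ hD.
      have hPD : forall Pi, List.In Pi P -> exists A, List.In A U /\ forall z y, Pi z -> D y -> A (Ginv (z, y)).
        move=> Pi hPi; have [c Pic] := hPb _ hPi.
        have [A' [hA' bA']] := he (c, c').
        have [A [hA eA]] := In_map_seqE hA'; rewrite eA in bA'.
        exists A; split => // z y Pz Dy.
        by apply: (bA' (z, y)); split; [apply: Pic|apply: Dc'].
      have [E' [hE' HE']] := join_transfer hk hPD hE.
      exists E'; split => // x [/= Cx Dx].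
      by apply: HE' => //; apply: CE.
    - move=> x.
      apply: (leq_trans (count_allpairs (p1 := fun C => `[< C (G x).1 >])
                                        (p2 := fun D => `[< D (G x).2 >]) _ _ _)).
        by move=> a b /asboolP [h1 h2]; apply/andP; split; apply/asboolP.
      rewrite /M; apply: leqW; apply: leq_mul; first exact: ordVz.
      exact: count_size.
  rewrite /cover_D_n /cover_D.
  set S := [set (k%:R : R) | k in _].
  have SM : S M%:R.
    by exists M.
  have lb : lbound S 0 by move=> _ [k _ <-]; exact: ler0n.
  apply/andP; split.
    by apply: lb_le_inf => //; exists M%:R.
  by apply: ge_inf => //; exists 0.
rewrite /mdim.
have -> : [set (cover_D_dyn U alpha : R)%:E | U in finite_open_cover] = [set 0%E].
  apply/seteqP; split => [_ [U hU <-]|_ ->]; first by rewrite /= key.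
  have hT : finite_open_cover [:: [set: Z * Y]].
    split; first by constructor; [exact: openT|constructor].
    by move=> x; exists setT; split; [left|].
  by exists [:: setT] => //; rewrite key.
by rewrite ereal_sup1.
Qed.
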